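(* Let $r \geq 3$ and $k \geq \max\{r-1,4\}$ be integers. Define the binary word $x_{k,r} = ((01)^{k-1} 00)^{r-3} (01)^{k-1} 0$. Then $|x_{k,r}| = 2k(r-2)-1$, and $x_{k,r}$ contains no $k$-power as a factor and no $r$-antipower as a factor.
   Context: For a word $u$ and integer $k\ge 1$, $u^k$ denotes the concatenation of $k$ copies of $u$. A $k$-power is a word of the form $u^k$ with $u$ nonempty. An $r$-antipower is a word of the form $u_1 u_2 \cdots u_r$ with $|u_1| = \cdots = |u_r|$ and the words $u_1,\dots,u_r$ pairwise distinct. A factor of a word $w$ is a contiguous subword of $w$. $|w|$ denotes the length of $w$. *)

(* Defs.v *)
From mathcomp Require Import all_boot.
Set Implicit Arguments. Unset Strict Implicit. Unset Printing Implicit Defensive.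

(* Binary words as sequences of booleans: false = 0, true = 1. *)
Definition word := seq bool.

Definition wpow (u : word) (k : nat) : word := flatten (nseq k u).

Definition is_factor (w x : word) : Prop := exists p s : word, x = p ++ w ++ s.

Definition is_kpower (k : nat) (w : word) : Prop :=
  exists u : word, u <> [::] /\ w = wpow u k.

Definition is_antipower (r : nat) (w : word) : Prop :=
  exists us : seq word,
    [/\ size us = r, w = flatten us,
        (forall u v, u \in us -> v \in us -> size u = size v) & uniq us].

Definition x_word (k r : nat) : word :=
  wpow (wpow [:: false; true] (k - 1) ++ [:: false; false]) (r - 3)
  ++ wpow [:: false; true] (k - 1) ++ [:: false].

(* Main.v *)
Require Import Defs.
From mathcomp Require Import all_boot.
From mathcomp Require Import zify.
Set Implicit Arguments. Unset Strict Implicit.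

Lemma wpowS u n : wpow u n.+1 = u ++ wpow u n. Proof. by []. Qed.
Lemma size_wpow u n : size (wpow u n) = size u * n.
Proof. elim: n => [|n IH]; first by rewrite muln0. by rewrite wpowS size_cat IH mulnS. Qed.
Lemma nth_wpow u n i : i < size u * n -> nth false (wpow u n) i = nth false u (i %% size u).
Proof.
elim: n i => [|n IH] i; first by rewrite muln0.
rewrite wpowS nth_cat mulnS => hi.
case: ltnP => h; first by rewrite modn_small.
rewrite IH; last lia.
by rewrite -{2}(subnK h) modnDr.
Qed.

Definition sepf d i := odd i && ~~ (d %| i.+1).

Lemma sepf_mod k i : 0 < k -> sepf (2*k) (i %% (2*k)) = sepf (2*k) i.
Proof.
move=> hk; rewrite /sepf odd_mod; last by rewrite oddM.
congr (_ && ~~ _).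
by rewrite {2}(divn_eq i (2*k)) -addnS dvdn_addr // dvdn_mull.
Qed.

Lemma nth01 i : nth false [:: false; true] (i %% 2) = odd i.
Proof. by rewrite modn2; case: odd. Qed.

Lemma nthA k j : j < 2 * (k - 1) -> nth false (wpow [:: false; true] (k - 1)) j = odd j.
Proof. by move=> h; rewrite nth_wpow // nth01. Qed.

Lemma nthB k j : 0 < k -> j < 2 * k ->
  nth false (wpow [:: false; true] (k - 1) ++ [:: false; false]) j = sepf (2*k) j.
Proof.
move=> hk hj; rewrite nth_cat size_wpow /=.
case: ltnP => h.
  rewrite nthA // /sepf.
  have -> : (2 * k %| j.+1) = false.
    apply/negbTE/negP => /dvdn_leq; lia.
  by rewrite andbT.
have [->|->] : j = 2 * (k-1) \/ j = (2*(k-1)).+1 by lia.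
  by rewrite subnn /sepf /= oddM.
rewrite subSn // subnn /= /sepf.
have -> : ((2 * (k - 1)).+2) = 2 * k by lia.
by rewrite dvdnn andbF.
Qed.

Lemma nthC k j : 0 < k -> j < (2 * k).-1 ->
  nth false (wpow [:: false; true] (k - 1) ++ [:: false]) j = sepf (2*k) j.
Proof.
move=> hk hj; rewrite -nthB //; last by move: hj; case: k hk => // k _; rewrite mulnS addSn /=; lia.
rewrite !nth_cat size_wpow /=; case: ltnP => // h.
have -> : j - 2 * (k-1) = 0 by lia.
by [].
Qed.

Lemma nthX k r i : 0 < k -> 3 <= r -> i < 2 * k * (r - 2) - 1 ->
  nth false (x_word k r) i = sepf (2*k) i.
Proof.
move=> hk hr hi; rewrite /x_word nth_cat size_wpow size_cat size_wpow /=.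
have -> : 2 * (k - 1) + 2 = 2 * k by lia.
case: ltnP => h.
  rewrite nth_wpow; last by rewrite size_cat size_wpow /= (_ : 2 * (k - 1) + 2 = 2 * k) //; lia.
  rewrite size_cat size_wpow /=.
  have -> : 2 * (k - 1) + 2 = 2 * k by lia.
  rewrite nthB //; last by rewrite ltn_pmod // muln_gt0.
  by rewrite sepf_mod.
rewrite nthC //; last first.
  have : 2 * k * (r - 2) = 2 * k * (r - 3) + 2 * k.
    by rewrite -mulnSr; congr (_ * _); lia.
  lia.
rewrite -sepf_mod // -[in RHS]sepf_mod //; congr sepf.
rewrite -{2}(subnK h) mulnC addnC.
by rewrite modnMDl.
Qed.

Lemma size_X k r : 0 < k -> 3 <= r -> size (x_word k r) = 2 * k * (r - 2) - 1.
Proof.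
move=> hk hr; rewrite /x_word !size_cat !size_wpow /= size_cat size_wpow /=.
have -> : 2 * (k - 1) + 2 = 2 * k by lia.
have : 2 * k * (r - 2) = 2 * k * (r - 3) + 2 * k.
  by rewrite -mulnSr; congr (_ * _); lia.
set a := 2 * k * (r - 3); set b := 2 * k * (r - 2); lia.
Qed.

Lemma zz d i : ~~ sepf d i -> ~~ sepf d i.+1 -> exists s, (s = i \/ s = i.+1) /\ d %| s.+1.
Proof.
rewrite /sepf /=; case o: (odd i) => /= h1 h2.
  by exists i; split; [left | move: h1; rewrite negbK].
by exists i.+1; split; [right | move: h2; rewrite negbK].
Qed.

Lemma sep2 d s s' : 0 < d -> d %| s.+1 -> d %| s'.+1 -> s < s' -> s + d <= s'.
Proof.
move=> hd h1 h2 hs.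
have h3 : d %| s'.+1 - s.+1 by rewrite dvdn_sub.
have := dvdn_leq _ h3; lia.
Qed.

Lemma sep_odd k s : 2 * k %| s.+1 -> odd s.
Proof.
move=> h; have : 2 %| s.+1 by apply: dvdn_trans h; apply: dvdn_mulr.
by rewrite dvdn2 /= negbK.
Qed.

Lemma no_kpow k r P m : 4 <= k -> r - 1 <= k -> 3 <= r -> 0 < m ->
  P + k * m <= 2 * k * (r - 2) - 1 ->
  (forall j j', j < k * m -> j' < k * m -> j %% m = j' %% m ->
     sepf (2*k) (P+j) = sepf (2*k) (P+j')) -> False.
Proof.
move=> hk hrk hr hm hP per.
have hk0 : 0 < 2 * k by lia.
have hkm : 3 * m <= k * m by rewrite leq_mul2r; lia.
case: (ltngtP m 1) => hm1; first lia; last first.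
  subst m; rewrite muln1 in per hkm hP.
  have c j : j < k -> sepf (2*k) (P+j) = sepf (2*k) P.
    by move=> hj; rewrite -[P in RHS]addn0; apply: per => //; [lia | rewrite !modn1].
  have h01 : ~~ sepf (2*k) P.
    apply/negP => h0; have h1 := h0; rewrite -(c 1) // in h1; last lia.
    move: h0 h1; rewrite /sepf addn1 /= => /andP [-> _] /andP [].
    by [].
  have [s1 [e1 d1]] : exists s, (s = P \/ s = P.+1) /\ 2 * k %| s.+1.
    apply: zz => //; by rewrite -(addn1 P) c //; lia.
  have [s2 [e2 d2]] : exists s, (s = P + 2 \/ s = (P + 2).+1) /\ 2 * k %| s.+1.
    apply: zz; first by rewrite c //; lia.
    by rewrite -(addn1 (P+2)) -addnA c //; lia.
  have := sep2 hk0 d1 d2; lia.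
have h2k : 2 * k <= k * m by rewrite mulnC leq_mul2l; lia.
set j := (2 * k).-1 - P %% (2 * k).
have hj : j < 2 * k by rewrite /j; lia.
have hdj : 2 * k %| (P + j).+1.
  have hr0 := ltn_pmod P hk0.
  rewrite {1}(divn_eq P (2 * k)) /j.
  set q := P %/ (2 * k); set rr := P %% (2 * k).
  have -> : (q * (2 * k) + rr + ((2 * k).-1 - rr)).+1 = q * (2 * k) + 2 * k.
    set z := q * (2 * k); lia.
  by rewrite dvdn_add // dvdn_mull.
have hodd := sep_odd hdj.
have [a [ha1 ga ga1]] : exists a, [/\ a.+1 < k * m, ~~ sepf (2*k) (P + a) &
                                       ~~ sepf (2*k) (P + a.+1)].
  case: j hj hdj hodd => [|j] hj hdj hodd.
    exists 0; split; first lia.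
      by rewrite /sepf hdj andbF.
    rewrite addn0 in hodd; by rewrite /sepf addn1 /= hodd.
  exists j; split; first lia.
    by move: hodd; rewrite addnS /= /sepf; case: odd.
  by rewrite /sepf hdj andbF.
set b := a %% m.
have hb : b < m by rewrite ltn_mod.
have eb : b = a %% m by [].
clearbody b j.
have gb : ~~ sepf (2*k) (P + b).
  by rewrite (per b a) //; [lia | lia | rewrite eb modn_mod].
have gb1 : ~~ sepf (2*k) (P + b.+1).
  rewrite (per b.+1 a.+1) //; first by clear -hb hkm; lia.
  by rewrite eb -[(a %% m).+1]addn1 -[a.+1]addn1 modnDml.
have gbm : ~~ sepf (2*k) (P + (b + m)).
  by rewrite (per (b + m) a) //; [lia | lia | rewrite eb modnDr modn_mod].
have gbm1 : ~~ sepf (2*k) (P + (b + m).+1).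
  rewrite (per (b + m).+1 a.+1) //; first by clear -hb hkm; lia.
  by rewrite eb -[(a %% m + m).+1]addn1 -[a.+1]addn1 -addnA [m + 1]addnC addnA modnDr modnDml.
have gb1' : ~~ sepf (2*k) (P + b).+1 by rewrite -addnS.
have gbm1' : ~~ sepf (2*k) (P + (b + m)).+1 by rewrite -addnS.
have [s1 [e1 d1]] := zz gb gb1'.
have [s2 [e2 d2]] := zz gbm gbm1'.
have hs : s1 < s2 by clear -e1 e2 hm1; lia.
have h := sep2 hk0 d1 d2 hs.
have hm2 : 2 * k - 1 <= m by clear -h e1 e2; lia.
have h3 : k * (2 * k - 1) <= k * m by rewrite leq_mul2l hm2 orbT.
have h4 : 2 * k * (r - 2) <= 2 * k * (k - 1) by rewrite leq_mul2l; apply/orP; right; lia.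
have h5 : 2 * k * (k - 1) < k * (2 * k - 1).
  by rewrite -mulnA mulnCA ltn_pmul2l; lia.
move: h3 h4 h5 hP hk; clear.
move: (k * m) (2 * k * (k - 1)) (2 * k * (r - 2)) (k * (2 * k - 1)) => A B C D.
lia.
Qed.

Lemma size_flatten_unif (us : seq word) m : (forall u, u \in us -> size u = m) ->
  size (flatten us) = size us * m.
Proof.
elim: us => [|u us IH] h //=.
have hu : size u = m by apply: h; rewrite mem_head.
rewrite size_cat hu IH; first by rewrite mulSn.
by move=> v hv; apply: h; rewrite in_cons hv orbT.
Qed.

Lemma nth_flatten_unif (us : seq word) m t j : (forall u, u \in us -> size u = m) ->
  t < size us -> j < m -> nth false (flatten us) (t * m + j) = nth false (nth [::] us t) j.
Proof.
elim: us t => [|u us IH] t h //= ht hj.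
have hu : size u = m by apply: h; rewrite mem_head.
rewrite nth_cat hu; case: t ht => [|t] ht /=; first by rewrite mul0n add0n hj.
rewrite mulSn -addnA ltnNge leq_addr /= addKn IH //.
by move=> v hv; apply: h; rewrite in_cons hv orbT.
Qed.

Lemma factor_nth (p w s X : word) j : X = p ++ w ++ s -> j < size w ->
  nth false w j = nth false X (size p + j).
Proof.
move=> -> hj; rewrite nth_cat ltnNge leq_addr /= addKn nth_cat hj //.
Qed.

Lemma factor_size (p w s X : word) : X = p ++ w ++ s -> size p + size w <= size X.
Proof. by move=> ->; rewrite !size_cat addnA leq_addr. Qed.

Lemma no_anti k r P m (us : seq word) : 0 < k -> 3 <= r -> 0 < m -> size us = r -> uniq us ->
  (forall u, u \in us -> size u = m) -> P + r * m <= 2 * k * (r - 2) - 1 ->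
  (forall t j, t < r -> j < m -> nth false (nth [::] us t) j = sepf (2 * k) (P + t * m + j)) ->
  False.
Proof.
move=> hk hr hm hus uus hsz hP hblk.
have hd : 0 < 2 * k by lia.
move: hP hblk; set d := 2 * k => hP hblk.
have {}hd : 0 < d by [].
clearbody d.
have hdec i : i = i %/ d * d + i %% d /\ i %% d < d by split; [apply: divn_eq | apply: ltn_pmod].
pose hasSep t := d.-1 - (P + t * m) %% d < m.
have blockC t : t < r -> ~~ hasSep t ->
    nth [::] us t = mkseq (fun j => odd (P + t * m) (+) odd j) m.
  move=> ht hs; apply: (@eq_from_nth _ false).
    by rewrite size_mkseq hsz // mem_nth // hus.
  move=> j; rewrite hsz ?mem_nth ?hus // => hj.
  rewrite nth_mkseq // hblk // /sepf oddD.
  suff -> : (d %| (P + t * m + j).+1) = false by rewrite andbT.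
  apply/negbTE/negP; move: hs; rewrite /hasSep -leqNgt.
  have [e1 e2] := hdec (P + t * m).
  move: e1 e2; set i := P + t * m; set q := i %/ d; set rr := i %% d => e1 e2 hs.
  rewrite e1 -addnA -addnS (dvdn_addr _ (dvdn_mull q (dvdnn d))).
  move/dvdn_leq => /(_ isT); lia.
have hcnt : count hasSep (iota 0 r) <= r - 3.
  rewrite -size_filter.
  have : size [seq (P + t * m) %/ d | t <- [seq t <- iota 0 r | hasSep t]] <= size (iota 0 (r - 3)).
    apply: uniq_leq_size.
      rewrite map_inj_in_uniq ?filter_uniq ?iota_uniq //.
      have gen : forall t t', t \in [seq x <- iota 0 r | hasSep x] -> t < t' ->
          (P + t * m) %/ d <> (P + t' * m) %/ d.
        move=> t t'.
        rewrite mem_filter mem_iota => /andP [hs _] htt' e.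
        have h1 : t * m + m <= t' * m by rewrite addnC -mulSn leq_mul2r htt' orbT.
        have [e1 e2] := hdec (P + t * m); have [e3 e4] := hdec (P + t' * m).
        move: hs; rewrite /hasSep => hs.
        rewrite -e in e3.
        move: e1 e2 e3 e4 hs h1; move: ((P + t * m) %/ d * d) ((P + t * m) %% d) ((P + t' * m) %% d) (t * m) (t' * m) => A B C D E.
        lia.
      move=> t t' ht ht' e; case: (ltngtP t t') => // h.
        by case: (gen t t' ht h e).
      by case: (gen t' t ht' h (esym e)).
    move=> x /mapP [t]; rewrite mem_filter mem_iota => /andP [hs /andP [_ ht]] ->.
    rewrite mem_iota add0n leq0n /=.
    have [e1 e2] := hdec (P + t * m).
    move: hs; rewrite /hasSep => hs.
    have h1 : t * m + m <= r * m by rewrite addnC -mulSn leq_mul2r ht orbT.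
    have h2 : ((P + t * m) %/ d).+1 * d < (r - 2) * d.
      rewrite mulSn [(r - 2) * d]mulnC.
      move: e1 e2 hs h1 hP.
      move: ((P + t * m) %/ d * d) ((P + t * m) %% d) (t * m) (r * m) (d * (r - 2)) => A B D E F.
      lia.
    rewrite ltn_pmul2r // in h2; lia.
  by rewrite size_map size_iota.
set T := [seq t <- iota 0 r | ~~ hasSep t].
have hT : 3 <= size T.
  have := count_predC hasSep (iota 0 r); rewrite size_iota size_filter.
  have -> : count (predC hasSep) (iota 0 r) = count (fun t => ~~ hasSep t) (iota 0 r) by [].
  lia.
have uT : uniq T by rewrite filter_uniq ?iota_uniq.
have key t t' : t \in T -> t' \in T -> odd (P + t * m) = odd (P + t' * m) -> t = t'.
  rewrite !mem_filter !mem_iota !add0n /= => /andP [h1 h2] /andP [h3 h4] e.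
  have : nth [::] us t == nth [::] us t' by rewrite blockC // blockC // e.
  by rewrite nth_uniq ?hus // => /eqP.
clearbody T.
have m0 : nth 0 T 0 \in T by apply: mem_nth; exact: leq_trans _ hT.
have m1 : nth 0 T 1 \in T by apply: mem_nth; exact: leq_trans _ hT.
have m2 : nth 0 T 2 \in T by apply: mem_nth; exact: leq_trans _ hT.
have n01 : nth 0 T 0 <> nth 0 T 1 by move/eqP; rewrite nth_uniq //; apply: leq_trans _ hT.
have n02 : nth 0 T 0 <> nth 0 T 2 by move/eqP; rewrite nth_uniq //; apply: leq_trans _ hT.
have n12 : nth 0 T 1 <> nth 0 T 2 by move/eqP; rewrite nth_uniq //; apply: leq_trans _ hT.
have H01 := key _ _ m0 m1; have H02 := key _ _ m0 m2; have H12 := key _ _ m1 m2.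
move: H01 H02 H12; case: (odd (P + nth 0 T 0 * m)); case: (odd (P + nth 0 T 1 * m));
  case: (odd (P + nth 0 T 2 * m)) => H01 H02 H12;
  first [by case: n01; apply: H01 | by case: n02; apply: H02 | by case: n12; apply: H12].
Qed.

Theorem theorem1 (k r : nat) :
  3 <= r -> maxn (r - 1) 4 <= k ->
  size (x_word k r) = 2 * k * (r - 2) - 1 /\
  (forall w, is_factor w (x_word k r) -> ~ is_kpower k w) /\
  (forall w, is_factor w (x_word k r) -> ~ is_antipower r w).
Proof.
move=> hr; rewrite geq_max => /andP [hrk hk].
have hk0 : 0 < k by lia.
split; first exact: size_X.
split.
  move=> w [p [s eX]] [u [hu ew]].
  have hm : 0 < size u by rewrite lt0n size_eq0; apply/eqP.
  have hsw : size w = k * size u by rewrite ew size_wpow mulnC.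
  have hfs := factor_size eX; rewrite size_X // hsw in hfs.
  apply: (@no_kpow k r (size p) (size u)) => // j j' hj hj' e.
  have hX i : i < k * size u -> sepf (2 * k) (size p + i) = nth false u (i %% size u).
    move=> hi; rewrite -(@nthX k r) //; last by lia.
    by rewrite -(@factor_nth p w s _ _ eX) ?hsw // ew nth_wpow // mulnC.
  by rewrite !hX // e.
move=> w [p [s eX]] [us [hus ew hsz uus]].
set m := size (nth [::] us 0).
have hsz' : forall u, u \in us -> size u = m.
  by move=> u hu; apply: hsz => //; apply: mem_nth; rewrite hus; lia.
have hsw : size w = r * m by rewrite ew (size_flatten_unif hsz') hus.
have hfs := factor_size eX; rewrite size_X // hsw in hfs.
case: (posnP m) => hm.
  have e0 : nth [::] us 0 = [::] by apply/size0nil; rewrite hsz' // mem_nth // hus; lia.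
  have e1 : nth [::] us 1 = [::] by apply/size0nil; rewrite hsz' // mem_nth // hus; lia.
  have : nth [::] us 0 == nth [::] us 1 by rewrite e0 e1.
  by rewrite nth_uniq // hus; lia.
apply: (@no_anti k r (size p) m us) => // t j ht hj.
rewrite -(nth_flatten_unif hsz') ?hus // -ew (@factor_nth p w s _ _ eX) ?hsw; last first.
  have : t * m + m <= r * m by rewrite addnC -mulSn leq_mul2r ht orbT.
  lia.
rewrite nthX // addnA //.
have : t * m + m <= r * m by rewrite addnC -mulSn leq_mul2r ht orbT.
lia.
Qed.
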